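(* Let $m$ and $n_1,\ldots,n_t$ be positive integers such that for every $1\leq i\leq t$, $n_i$ is even and $m\geq n_i\geq 2 \lceil \log (81^{t-1}m)\rceil+1$. Then $BR(C_{n_1},\ldots,C_{n_t},K_{m,m})\leq 81^{t}m$.
   Context: $C_k$ is the cycle on $k$ vertices and $K_{m,m}$ the complete bipartite graph with both parts of size $m$. For bipartite graphs $G_1,\ldots,G_k$, the bipartite Ramsey number $BR(G_1,\ldots,G_k)$ is the smallest integer $b$ such that for every coloring of the edges of $K_{b,b}$ with colors $1,\ldots,k$ there is, for some $i$, a copy of $G_i$ all of whose edges have color $i$. $\log$ denotes the logarithm to base $2$. *)

(* Defs.v *)
From mathcomp Require Import all_boot.
Set Implicit Arguments. Unset Strict Implicit. Unset Printing Implicit Defensive.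

Record sgraph := SGraph { sg_vert : finType; sg_adj : rel sg_vert }.

Definition cycle_graph (n : nat) : sgraph :=
  @SGraph 'I_n (fun i j : 'I_n =>
    (i != j) && ((val j == i.+1 %% n) || (val i == j.+1 %% n))).

Definition Kmm (m : nat) : sgraph :=
  @SGraph ('I_m + 'I_m)%type (fun u v =>
    match u, v with
    | inl _, inr _ | inr _, inl _ => true
    | _, _ => false
    end).

(* A k-edge-coloring of K_{b,b} (parts 'I_b + 'I_b): colour of edge {x,y}, x left, y right. *)
Definition bcoloring (b k : nat) := 'I_b -> 'I_b -> 'I_k.

Definition ecol (b k : nat) (c : bcoloring b k) (u v : ('I_b + 'I_b)%type) : option 'I_k :=
  match u, v with
  | inl x, inr y => Some (c x y)
  | inr y, inl x => Some (c x y)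
  | _, _ => None
  end.

Definition mono_copy (b k : nat) (c : bcoloring b k) (i : 'I_k) (G : sgraph) : Prop :=
  exists f : sg_vert G -> ('I_b + 'I_b)%type,
    injective f /\ forall u v, sg_adj u v -> ecol c (f u) (f v) = Some i.

Definition bip_ramsey_prop (Gs : seq sgraph) (b : nat) : Prop :=
  forall c : bcoloring b (size Gs),
    exists i : 'I_(size Gs), mono_copy c i (nth (cycle_graph 0) Gs i).

(* BR(Gs) <= N, where BR(Gs) is the least b with the property:
   equivalently, some b <= N has the property. *)
Definition BR_le (Gs : seq sgraph) (N : nat) : Prop :=
  exists2 b, b <= N & bip_ramsey_prop Gs b.

(* Main.v *)
Require Import Defs.
From mathcomp Require Import all_boot.
From mathcomp Require Import zify.
From Stdlib Require Import Classical.
Set Implicit Arguments. Unset Strict Implicit. Unset Printing Implicit Defensive.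

Ltac tidy := repeat match goal with H : _ |- _ => clear H end.
Ltac clia := tidy; lia.

Lemma sub_card (T : finType) (A : {set T}) n :
  n <= #|A| -> exists B : {set T}, B \subset A /\ #|B| = n.
Proof.
move=> /card_geqP [s [us <- sA]]; exists [set x in s]; split.
  by apply/subsetP => x; rewrite inE => /sA.
by rewrite cardsE; apply/card_uniqP.
Qed.

Section Core.
Variable V : finType.
Variable adj : rel V.
Hypothesis adj_sym : forall x y, adj x y = adj y x.
Variable side : V -> bool.
Hypothesis adj_side : forall x y, adj x y -> side y = ~~ side x.
Variable M : nat.

Lemma adj_irr x : adj x x = false.
Proof. by apply/negP => /adj_side; case: (side x). Qed.

Definition Dside (D : {set V}) s := D :&: [set v | side v == s].
Definition NB (X : {set V}) := [set y | [exists x in X, adj x y]].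

Definition noHole (D : {set V}) := forall s (X Y : {set V}),
  X \subset Dside D s -> Y \subset Dside D (~~ s) -> M <= #|X| -> M <= #|Y| ->
  exists x y, [/\ x \in X, y \in Y & adj x y].

Lemma noHole_sub (D D' : {set V}) : D' \subset D -> noHole D -> noHole D'.
Proof.
move=> sub H s X Y sX sY; apply: H.
- apply: subset_trans sX _; exact: setSI.
- apply: subset_trans sY _; exact: setSI.
Qed.

Lemma Dside_sub (D D' : {set V}) s : D' \subset D -> Dside D' s \subset Dside D s.
Proof. exact: setSI. Qed.

Lemma in_Dside (D : {set V}) s x : (x \in Dside D s) = (x \in D) && (side x == s).
Proof. by rewrite !inE. Qed.

Record dfs_ok (D S : {set V}) (T : seq V) : Prop := DfsOk {
  dfs1 : S \subset D; dfs2 : all (mem D) T; dfs3 : uniq T;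
  dfs4 : forall x, x \in T -> x \notin S; dfs5 : sorted adj T;
  dfs6 : forall x y, x \in S -> y \in D -> adj x y -> (y \in S) || (y \in T)}.

Definition Uset (D S : {set V}) (T : seq V) :=
  [set y in D | (y \notin S) && (y \notin T)].

Lemma dfs_reach (D : {set V}) : M < #|Dside D false| -> M < #|Dside D true| ->
  forall S T, dfs_ok D S T -> #|Dside S false| <= M -> #|Dside S true| <= M ->
  exists S' T', [/\ dfs_ok D S' T', #|Dside S' false| <= M,
       #|Dside S' true| <= M & (M <= #|Dside S' false|) || (M <= #|Dside S' true|)].
Proof.
move=> bigF bigT S T.
have [n] := ubnP (2 * #|Uset D S T| + size T).
elim: n S T => // n IH S T mu ok leF leT.
case: (boolP ((M <= #|Dside S false|) || (M <= #|Dside S true|))) => [fin|].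
  by exists S, T.
rewrite negb_or -!ltnNge => /andP [ltF ltT].
case: ok => [sSD aT uT dT sT noE].
case: T mu aT uT dT sT noE => [|x T'] mu aT uT dT sT noE.
- case: (pickP (fun u => (u \in D) && (u \notin S))) => [u /andP [uD uS]|none].
  + have ok' : dfs_ok D S [:: u].
      split => //=; first by rewrite uD.
      - by move=> z; rewrite inE => /eqP ->.
      - by move=> a b aS bD ab; move: (noE a b aS bD ab); rewrite /= orbF => ->.
    apply: (IH S [:: u]) => //.
    have: Uset D S [:: u] \proper Uset D S [::].
      rewrite properE; apply/andP; split.
        by apply/subsetP => z; rewrite !inE => /and3P [-> -> _].
      apply/subsetPn; exists u; first by rewrite !inE uD uS.
      by rewrite !inE eqxx /= !andbF.
    move/proper_card => /= lt; rewrite /= in mu; lia.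
  + exfalso.
    have : Dside D false \subset Dside S false.
      apply/subsetP => z; rewrite !inE => /andP [zD ->]; rewrite andbT.
      by move: (none z); rewrite zD /= => /negbFE.
    by move/subset_leq_card; lia.
- case: (pickP (fun u => [&& u \in D, u \notin S, u \notin x :: T' & adj x u]))
    => [u /and4P [uD uS uNT ux]|none].
  + have ok' : dfs_ok D S [:: u, x & T'].
      split => //=.
      - by rewrite uD.
      - by rewrite uNT; exact: uT.
      - move=> z; rewrite inE => /orP [/eqP -> //|]; exact: dT.
      - by rewrite adj_sym ux.
      - move=> a b aS bD ab; move: (noE a b aS bD ab) => /orP [->//|bT].
        by rewrite in_cons bT !orbT.
    apply: (IH S [:: u, x & T']) => //.
    have: Uset D S [:: u, x & T'] \proper Uset D S (x :: T').
      rewrite properE; apply/andP; split.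
        apply/subsetP => z; rewrite !inE => /and3P [-> -> ].
        by rewrite negb_or => /andP [].
      apply/subsetPn; exists u; first by rewrite !inE uD uS.
      by rewrite inE mem_head /= !andbF.
    move/proper_card => /= lt; rewrite /= in mu; lia.
  + move: uT => /= /andP [xT' uT'].
    have ok' : dfs_ok D (x |: S) T'.
      split => //.
      - by rewrite subUset sub1set sSD; move: aT => /= /andP [-> _].
      - by move: aT => /= /andP [].
      - move=> z zT; rewrite !inE negb_or dT ?inE ?zT ?orbT // andbT.
        by apply/eqP => zx; move: xT'; rewrite -zx zT.
      - exact: path_sorted sT.
      - move=> a b; rewrite !inE => /orP [/eqP ->|aS] bD ab.
        + move: (none b); rewrite bD ab andbT /= => /negbT.
          rewrite negb_and !negbK inE => /orP [->|/orP [/eqP bx|->]];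
            rewrite ?orbT //.
          by move: ab; rewrite bx adj_irr.
        + move: (noE a b aS bD ab) => /orP [->|]; rewrite ?orbT //.
          by rewrite inE => /orP [->|->]; rewrite ?orbT.
    have sizeS s : #|Dside (x |: S) s| <= #|Dside S s| + 1.
      have: Dside (x |: S) s \subset x |: Dside S s.
        by apply/subsetP => z; rewrite !inE => /andP [/orP [->|->] ->];
          rewrite ?orbT.
      by move/subset_leq_card; rewrite cardsU1; lia.
    apply: (IH (x |: S) T') => //; last first.
    + by move: (sizeS true); lia.
    + by move: (sizeS false); lia.
    have: Uset D (x |: S) T' \subset Uset D S (x :: T').
      apply/subsetP => z; rewrite !inE => /and3P [-> ].
      by rewrite negb_or => /andP [zx zS] zT; rewrite zS (negbTE zx) /=.
    move/subset_leq_card => le; rewrite /= in mu; lia.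
Qed.


Lemma long_path (D : {set V}) L0 : noHole D -> (forall s, L0 <= #|Dside D s|) ->
  M < L0 -> exists T : seq V,
  [/\ all (mem D) T, uniq T, sorted adj T & L0 <= 2 * M + size T].
Proof.
move=> H big lt.
have ok0 : dfs_ok D set0 [::].
  by split => //; rewrite ?sub0set // => x y; rewrite inE.
have c0 s : #|Dside set0 s| <= M by rewrite /Dside set0I cards0.
have [S [T [ok leF leT sOr]]] := dfs_reach (leq_trans lt (big false))
   (leq_trans lt (big true)) ok0 (c0 false) (c0 true).
have [s [geS leS]] : exists s, M <= #|Dside S s| /\ #|Dside S (~~ s)| <= M.
  by case/orP: sOr => ?; [exists false | exists true].
case: ok => sSD aT uT dT sT noE.
exists T; split => //.
set Y := Dside (Uset D S T) (~~ s).
have ltY : #|Y| < M.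
  rewrite ltnNge; apply/negP => geY.
  have [||x [y [xS yY xy]]] := H s (Dside S s) Y _ _ geS geY.
  - exact: Dside_sub.
  - by apply/subsetP => z; rewrite !inE => /andP [/andP [-> _] ->].
  move: yY xS; rewrite !inE => /andP [/and3P [yD yS yT] _] /andP [xS _].
  by move: (noE x y xS yD xy); rewrite (negbTE yS) (negbTE yT).
have: Dside D (~~ s) \subset Dside S (~~ s) :|: [set z in T] :|: Y.
  apply/subsetP => z; rewrite !inE => /andP [zD ->]; rewrite !andbT zD /=.
  by case: (z \in S); case: (z \in T).
move/subset_leq_card => le.
have := big (~~ s).
have le2 := leq_card_setU (Dside S (~~ s) :|: [set z in T]) Y.
have le3 := leq_card_setU (Dside S (~~ s)) [set z in T].
have le4 : #|[set z in T]| <= size T by rewrite cardsE card_size.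
move: le2 le3 => /leqifP + /leqifP; case: ifP => _; case: ifP => _ => *; lia.
Qed.

Lemma NBP (X : {set V}) y : reflect (exists2 x, x \in X & adj x y) (y \in NB X).
Proof. by rewrite inE; apply: (iffP existsP) => [[x /andP [? ?]]|[x ? ?]]; exists x => //; apply/andP. Qed.

Lemma card_sub3 (A B C E : {set V}) : A \subset B :|: C :|: E -> #|A| <= #|B| + #|C| + #|E|.
Proof.
move/subset_leq_card => le.
have le2 := leq_card_setU (B :|: C) E.
have le3 := leq_card_setU B C.
move: le2 le3 => /leqifP + /leqifP; case: ifP => _; case: ifP => _ => *; lia.
Qed.

Lemma card_sub2 (A B C : {set V}) : A \subset B :|: C -> #|A| <= #|B| + #|C|.
Proof.
move/subset_leq_card => le.
have le3 := leq_card_setU B C.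
move: le3 => /leqifP; case: ifP => _ => *; lia.
Qed.

Lemma clean (D R : {set V}) : 0 < M -> R \subset D -> noHole D ->
  (forall s, 11 * M <= #|Dside R s|) ->
  exists W : {set V}, [/\ W \subset R, (forall s, 10 * M <= #|Dside W s|) &
   forall s (X : {set V}), X \subset Dside W s -> 0 < #|X| -> #|X| < M ->
     4 * #|X| <= #|NB X :&: W|].
Proof.
move=> M0 sRD H big.
pose Phi (Z : {set V}) := [&& Z \subset R,
   [forall s : bool, #|NB (Dside Z s) :&: (R :\: Z)| <= 4 * #|Dside Z s|] &
   [forall s : bool, #|Dside Z s| < 2 * M]].
have P0 : Phi set0.
  have NB0 : NB set0 = set0.
    by apply/setP => z; rewrite [RHS]inE; apply/negP => /NBP [x]; rewrite inE.
  rewrite /Phi sub0set /=; apply/andP; split; apply/forallP => s;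
  by rewrite /Dside !set0I ?NB0 ?set0I cards0 ?muln0 ?muln2 /= ?M0 //; lia.
case: (arg_maxnP (fun Z : {set V} => #|Z|) P0) => Z PZ maxZ.
move: PZ => /and3P [sZR /forallP nbZ /forallP szZ].
have smallZ s : #|Dside Z s| < M.
  rewrite ltnNge; apply/negP => geZ.
  set Y := Dside R (~~ s) :\: NB (Dside Z s).
  have geY : M <= #|Y|.
    have: Dside R (~~ s) \subset
        Y :|: (NB (Dside Z s) :&: (R :\: Z)) :|: Dside Z (~~ s).
      apply/subsetP => z zR; move: (zR); rewrite !inE => /andP [zR' zs].
      rewrite zR' zs /= !andbT.
      by case: (z \in Z); case: [exists x in Dside Z s, adj x z]; rewrite ?orbT.
    move/card_sub3 => le.
    have := big (~~ s); have := nbZ s; have := szZ (~~ s); have := szZ s.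
    lia.
  have [||x [y [xZ yY xy]]] := H s (Dside Z s) Y _ _ geZ geY.
  - by apply: Dside_sub; apply: subset_trans sZR sRD.
  - apply: subset_trans (Dside_sub _ sRD); exact: subsetDl.
  move: yY; rewrite inE => /andP [/NBP []]; by exists x.
exists (R :\: Z); split; first exact: subsetDl.
  move=> s.
  have: Dside R s \subset Dside (R :\: Z) s :|: Dside Z s.
    apply/subsetP => z; rewrite !inE => /andP [zR ->]; rewrite zR !andbT.
    by case: (z \in Z).
  move/card_sub2 => le; have := big s; have := smallZ s; lia.
move=> s X sX X0 XM; rewrite leqNgt; apply/negP => small.
have XW : X \subset R :\: Z.
  by apply: subset_trans sX _; apply/subsetP => z; rewrite inE => /andP [].
have XZ : [disjoint X & Z].
  rewrite -setI_eq0; apply/eqP/setP => z; rewrite !inE.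
  by apply/negP => /andP [/(subsetP XW)]; rewrite !inE => /andP [/negbTE ->].
have Xs z : z \in X -> side z = s.
  by move/(subsetP sX); rewrite !inE => /andP [_ /eqP].
have PZ' : Phi (Z :|: X).
  apply/and3P; split.
  - by rewrite subUset sZR; apply: subset_trans XW (subsetDl _ _).
  - apply/forallP => s'.
    have [->|ne] := eqVneq s' s.
    + have e : Dside (Z :|: X) s = Dside Z s :|: X.
        apply/setP => z; rewrite !inE andb_orl.
        by case zX: (z \in X); rewrite ?orbF // Xs // eqxx orbT.
      rewrite e.
      have: NB (Dside Z s :|: X) :&: (R :\: (Z :|: X)) \subset
          (NB (Dside Z s) :&: (R :\: Z)) :|: (NB X :&: (R :\: Z)) :|: set0.
        apply/subsetP => z /setIP [/NBP [x xin xz] zin].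
        have zRZ : z \in R :\: Z.
          by move: zin; rewrite !inE negb_or => /andP [/andP [-> _] ->].
        rewrite !in_setU !in_setI in_set0 orbF zRZ !andbT.
        move: xin; rewrite in_setU => /orP [xZ|xX].
        * by apply/orP; left; apply/NBP; exists x.
        * by apply/orP; right; apply/NBP; exists x.
      move/card_sub3; rewrite cards0.
      have := leq_card_setU (Dside Z s) X; rewrite (_ : [disjoint _ & _]).
        move=> /leqifP /= /eqP -> le; have := nbZ s; lia.
      rewrite -setI_eq0; apply/eqP/setP => z; rewrite !inE.
      by apply/negP => /andP [/andP [zZ _] zX]; move: XZ; rewrite -setI_eq0 => /eqP /setP /(_ z); rewrite !inE zX zZ.
    + have e : Dside (Z :|: X) s' = Dside Z s'.
        apply/setP => z; rewrite !inE andb_orl.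
        case zX: (z \in X); rewrite ?orbF //.
        by rewrite Xs // eq_sym (negbTE ne) orbF.
      rewrite e; apply: leq_trans (nbZ s'); apply: subset_leq_card.
      apply: setIS; apply: setDS; exact: subsetUl.
  - apply/forallP => s'.
    have: Dside (Z :|: X) s' \subset Dside Z s' :|: X :|: set0.
      apply/subsetP => z; rewrite !inE => /andP [/orP [zZ|zX] ->];
      by rewrite ?zZ ?zX ?orbT.
    move/card_sub3; rewrite cards0; have := smallZ s'; lia.
have := maxZ _ PZ'.
have := leq_card_setU Z X; rewrite (_ : [disjoint Z & X]); last by rewrite disjoint_sym.
move=> /leqifP /= /eqP ->; lia.
Qed.

Definition tpath (W : {set V}) a i x (p : nat -> V) :=
  [/\ p 0 = a, p i = x, (forall j, j < i -> adj (p j) (p j.+1)),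
      (forall j, 0 < j <= i -> p j \in W) &
      (forall i1 i2, i1 <= i -> i2 <= i -> p i1 = p i2 -> i1 = i2)].

Lemma tree (W : {set V}) (a : V) (k : nat) :
  a \notin W -> 2 <= #|NB [set a] :&: W| -> 0 < k -> 2 ^ k.-1 < M ->
  (forall s (X : {set V}), X \subset Dside W s -> 0 < #|X| -> #|X| < M ->
     4 * #|X| <= #|NB X :&: W|) ->
  exists S : {set V}, [/\ S \subset W, 2 ^ k <= #|S|,
    (forall x, x \in S -> side x = side a (+) odd k) &
    forall x, x \in S -> exists p, tpath W a k x p].
Proof.
move=> aW deg k0 kM expd.
suff inv : forall i, i <= k -> exists S U : {set V},
  [/\ #|S| = 2 ^ i, #|U| < 2 ^ i, (0 < i -> S \subset W),
      (forall x, x \in S -> side x = side a (+) odd i) &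
      forall x, x \in S -> exists p, tpath W a i x p /\
         (forall j, j <= i -> p j \in U :|: S)].
  have [S [U [cS _ sW sides paths]]] := inv k (leqnn k).
  exists S; split => //; first exact: sW.
  - by rewrite cS.
  - by move=> x /paths [p [? _]]; exists p.
elim=> [_|i IH lik].
  exists [set a], set0; rewrite cards1 cards0; split => //.
  - by move=> x; rewrite inE => /eqP ->; rewrite addbF.
  - move=> x; rewrite inE => /eqP ->; exists (fun _ => a); split.
    + split => //.
      * by move=> j /andP [? ?]; exfalso; lia.
      * by move=> i1 i2; rewrite !leqn0 => /eqP -> /eqP ->.
    + by move=> j _; rewrite !inE eqxx orbT.
have [S [U [cS cU sW sides paths]]] := IH (ltnW lik).
set Av := (NB S :&: W) :\: (U :|: S).
have cAv : 2 ^ i.+1 <= #|Av|.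
  have: NB S :&: W \subset Av :|: U :|: S.
    apply/subsetP => z zN; rewrite !in_setU.
    rewrite /Av in_setD in_setU zN andbT; by case: (z \in U); case: (z \in S).
  move/card_sub3 => le.
  case: i IH lik cS cU sW sides paths le => [|i] _ lik cS cU sW sides paths le.
  - have eS : S = [set a].
      apply/eqP; rewrite eq_sym eqEcard cS cards1 leqnn andbT sub1set.
      have /card_gt0P [x xS] : 0 < #|S| by rewrite cS.
      by have [p [[p0 px _ _ _] _]] := paths x xS; rewrite -p0 px.
    have eU : U = set0 by apply/eqP; rewrite -cards_eq0; move: cU; rewrite expn0; lia.
    have: NB S :&: W \subset Av.
      apply/subsetP => z zN; rewrite inE zN andbT eU set0U eS inE.
      apply/eqP => za; move: zN; rewrite inE za => /andP [_]; exact/negP.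
    by move/subset_leq_card; rewrite eS; move: deg; rewrite expn1; lia.
  - have sub : S \subset Dside W (side a (+) odd i.+1).
      apply/subsetP => z zS; rewrite inE (subsetP (sW isT)) //= inE.
      by rewrite (sides z zS).
    have c2 : 0 < 2 ^ i.+1 by rewrite expn_gt0.
    have c3 : 2 ^ i.+1 < M.
      apply: leq_trans kM; rewrite ltnS leq_exp2l //; lia.
    have := expd _ _ sub; rewrite cS => /(_ c2 c3) e4.
    rewrite !expnS in cU cS e4 *; lia.
have [S' [sS' cS']] := sub_card cAv.
exists S', (U :|: S); split => //.
- have := leq_card_setU U S => /leqifP; rewrite expnS; case: ifP => _; lia.
- move=> _; apply: subset_trans sS' _; apply/subsetP => z; rewrite !inE.
  by case/andP => _ /andP [_ ->].
- move=> x' /(subsetP sS'); rewrite in_setD in_setI => /andP [_ /andP [/NBP [x xS xx'] _]].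
  by rewrite (adj_side xx') (sides x xS) /= -addbN.
move=> x' x'S; have := subsetP sS' x' x'S; rewrite in_setD in_setI => /andP [x'n /andP [x'N x'W]].
have [x xS xx'] := NBP _ _ x'N.
have [p [[p0 px pst pW pinj] pUS]] := paths x xS.
exists (fun j => if j == i.+1 then x' else p j); split; first split.
- by rewrite (_ : (0 == i.+1) = false).
- by rewrite eqxx.
- move=> j ji; rewrite eqSS; case: (eqVneq j i) => [->|ne].
  + by rewrite (_ : (i == i.+1) = false) ?px // ; apply/negbTE; rewrite neq_ltn ltnSn.
  + rewrite (_ : (j == i.+1) = false); last by apply/negbTE; rewrite neq_ltn; lia.
    apply: pst; lia.
- move=> j /andP [j0 ji]; case: ifP => // /eqP ne; apply: pW; lia.
- move=> i1 i2 l1 l2.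
  have nin j : j <= i -> p j != x'.
    move=> ji; apply/eqP => e; move: x'n; rewrite -e.
    by rewrite pUS.
  case: ifP => [/eqP ->|/eqP n1]; case: ifP => [/eqP -> //|/eqP n2].
  + by move=> e; have := nin i2; rewrite e eqxx; move/(_ _)/negP; lia.
  + by move=> e; have := nin i1; rewrite e eqxx; move/(_ _)/negP; lia.
  + apply: pinj; lia.
move=> j ji; case: ifP => [_|/eqP ne]; first by rewrite inE x'S orbT.
rewrite inE; have: j <= i by lia.
by move/pUS; rewrite inE => ->.
Qed.

End Core.

Section Core2.
Variable V : finType.
Variable adj : rel V.
Hypothesis adj_sym : forall x y, adj x y = adj y x.
Variable side : V -> bool.
Hypothesis adj_side : forall x y, adj x y -> side y = ~~ side x.
Variable M : nat.

Local Notation Dside := (Dside side).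
Local Notation NB := (NB adj).
Local Notation noHole := (noHole adj side M).

Lemma split_region (D : {set V}) a b : (forall s, a + b <= #|Dside D s|) ->
  exists R : {set V}, [/\ R \subset D, forall s, #|Dside R s| = a &
                forall s, b <= #|Dside (D :\: R) s|].
Proof.
move=> big.
have [X0 [sX0 cX0]] : exists X : {set V}, X \subset Dside D false /\ #|X| = a.
  by apply: sub_card; have := big false; lia.
have [X1 [sX1 cX1]] : exists X : {set V}, X \subset Dside D true /\ #|X| = a.
  by apply: sub_card; have := big true; lia.
have eR s : Dside (X0 :|: X1) s = if s then X1 else X0.
  apply/setP => z; rewrite !inE.
  case z0: (z \in X0); case z1: (z \in X1) => /=.
  - by move: (subsetP sX0 z z0) (subsetP sX1 z z1); rewrite !inE => /andP [_ /eqP ->] /andP [].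
  - by move: (subsetP sX0 z z0); rewrite !inE => /andP [_ /eqP ->]; case: s.
  - by move: (subsetP sX1 z z1); rewrite !inE => /andP [_ /eqP ->]; case: s.
  - by case: s.
exists (X0 :|: X1); split.
- rewrite subUset; apply/andP; split; [apply: subset_trans sX0 _|apply: subset_trans sX1 _];
  exact: subsetIl.
- by move=> s; rewrite eR; case: s.
move=> s.
have: Dside D s \subset Dside (D :\: (X0 :|: X1)) s :|: Dside (X0 :|: X1) s.
  apply/subsetP => z; rewrite !inE => /andP [zD ->]; rewrite zD !andbT.
  by case: (z \in X0); case: (z \in X1).
move/card_sub2; rewrite eR; have := big s; case: s; lia.
Qed.

Lemma NB_small (W B : {set V}) : (forall v, v \in B -> #|NB [set v] :&: W| <= 1) ->
  #|NB B :&: W| <= #|B|.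
Proof.
move=> sm.
pose phi y := odflt y [pick x in B | adj x y].
have phiP y : y \in NB B -> phi y \in B /\ adj (phi y) y.
  move/NBP => [x xB xy]; rewrite /phi.
  case: pickP => [z /andP [zB zy]|none] //=.
  by move: (none x); rewrite xB xy.
have inj : {in NB B :&: W &, injective phi}.
  move=> y1 y2 /setIP [y1N y1W] /setIP [y2N y2W] e.
  have [p1B p1y] := phiP y1 y1N; have [p2B p2y] := phiP y2 y2N.
  apply/eqP; apply/negP => /negP ne.
  have := sm _ p1B; apply/negP; rewrite -ltnNge; apply/card_gt1P.
  exists y1, y2; split => //; rewrite inE ?y1W ?y2W andbT; apply/NBP;
  exists (phi y1); rewrite ?inE // ?e //.
rewrite -(card_in_imset inj); apply: subset_leq_card.
apply/subsetP => z /imsetP [y]; rewrite inE => /andP [yN _] ->.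
by have [] := phiP y yN.
Qed.

Lemma bad_small (D W B : {set V}) : noHole D -> W \subset D -> B \subset D ->
  (forall s, 2 * M <= #|Dside W s|) ->
  (forall v, v \in B -> #|NB [set v] :&: W| <= 1) -> forall s, #|Dside B s| < M.
Proof.
move=> H sWD sBD bigW sm s; rewrite ltnNge; apply/negP => ge.
have [B' [sB' cB']] := sub_card ge.
set Y := Dside W (~~ s) :\: NB B'.
have cN : #|NB B' :&: W| <= M.
  rewrite -cB'; apply: NB_small => v vB; apply: sm.
  by move: (subsetP sB' v vB); rewrite inE => /andP [].
have geY : M <= #|Y|.
  have: Dside W (~~ s) \subset Y :|: (NB B' :&: W).
    apply/subsetP => z zW; have zW' : z \in W by move: zW; rewrite inE => /andP [].
    by rewrite in_setU in_setD in_setI zW zW' andbT /=; case: (z \in NB B').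
  move/card_sub2; have := bigW (~~ s); lia.
have [|||x [y [xB yY xy]]] := H s B' Y _ _ _ geY.
- apply: subset_trans sB' _; exact: Dside_sub.
- apply: (subset_trans (subsetDl _ _)); exact: Dside_sub.
- by rewrite cB'.
by move: yY; rewrite inE => /andP [/NBP []]; exists x.
Qed.

Lemma card_prefix N c : c <= N -> #|[set j : 'I_N | j < c]| = c.
Proof.
move=> cN.
have -> : [set j : 'I_N | j < c] = widen_ord cN @: [set: 'I_c].
  apply/setP => j; rewrite !inE; apply/idP/imsetP => [jc|[i _ ->] /=].
    by exists (Ordinal jc) => //; apply: val_inj.
  exact: ltn_ord.
rewrite card_imset ?cardsT ?card_ord // => i1 i2 /(congr1 val) /= e; exact: val_inj.
Qed.

End Core2.


Section Core3.
Variable V : finType.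
Variable adj : rel V.
Hypothesis adj_sym : forall x y, adj x y = adj y x.
Variable side : V -> bool.
Hypothesis adj_side : forall x y, adj x y -> side y = ~~ side x.
Variable M : nat.

Local Notation Dside := (Dside side).
Local Notation NB := (NB adj).
Local Notation noHole := (noHole adj side M).

Lemma side_path (T : seq V) a0 : sorted adj T ->
  forall j d, j + d < size T -> side (nth a0 T (j + d)) = side (nth a0 T j) (+) odd d.
Proof.
move/(sortedP a0) => st j; elim => [|d IH] lt; first by rewrite addn0 addbF.
rewrite addnS (adj_side (st _ _)) ?IH /= ?addbN //; lia.
Qed.

Lemma core (D : {set V}) (n k : nat) :
  noHole D -> (forall s, 81 * M <= #|Dside D s|) ->
  0 < k -> 2 ^ k.-1 < M -> M <= 2 ^ k ->
  ~~ odd n -> 2 * k < n -> n <= M ->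
  exists f : 'I_n -> V, injective f /\
    forall i j : 'I_n, val j = (val i).+1 %% n -> adj (f i) (f j).
Proof.
move=> H big k0 kM Mk evn kn nM.
have M0 : 0 < M by apply: leq_ltn_trans kM.
have b1 s : 11 * M + 70 * M <= #|Dside D s| by have := big s; clia.
have [R1 [sR1D cR1 rest1]] := split_region b1.
have b2 s : 11 * M + 59 * M <= #|Dside (D :\: R1) s| by have := rest1 s; clia.
have [R2 [sR2D cR2 rest2]] := split_region b2.
set R3 := (D :\: R1) :\: R2.
have sR2 : R2 \subset D := subset_trans sR2D (subsetDl _ _).
have sR3 : R3 \subset D := subset_trans (subsetDl _ _) (subsetDl _ _).
have c1 s : 11 * M <= #|Dside R1 s| by rewrite cR1.
have c2 s : 11 * M <= #|Dside R2 s| by rewrite cR2.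
have [W1 [sW1 cW1 eW1]] := clean M0 sR1D H c1.
have [W2 [sW2 cW2 eW2]] := clean M0 sR2 H c2.
have H3 : noHole R3 := noHole_sub sR3 H.
have lt59 : M < 59 * M by move: M0; clia.
have [T [aT uT sT lT]] := long_path adj_sym adj_side H3 rest2 lt59.
have disj13 z : z \in R3 -> z \notin R1 by rewrite !inE => /andP [_ /andP [->]].
have disj23 z : z \in R3 -> z \notin R2 by rewrite !inE => /andP [->].
have disj12 z : z \in R2 -> z \notin R1.
  by move/(subsetP sR2D); rewrite inE => /andP [].
have W1R1 z : z \in W1 -> z \in R1 by move/(subsetP sW1).
have W2R2 z : z \in W2 -> z \in R2 by move/(subsetP sW2).
set N := size T.
have N57 : 57 * M <= N by rewrite /N; move: lT; clia.
have [a0 _] : exists a0 : V, True.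
  have /card_gt0P [a0 _] : 0 < #|Dside D false| by have := big false; move: M0; clia.
  by exists a0.
pose g i := nth a0 T i.
have ginj i1 i2 : i1 < N -> i2 < N -> g i1 = g i2 -> i1 = i2.
  by move=> l1 l2 /eqP; rewrite /g nth_uniq // => /eqP.
have gR3 i : i < N -> g i \in R3.
  by move=> l; have := allP aT _ (mem_nth a0 l).
have gadj i : i.+1 < N -> adj (g i) (g i.+1).
  by move: i; apply/(sortedP a0).
set l := n - (2 * k).+1.
have ln : n = l + (2 * k).+1 by rewrite /l; move: kn; clia.
have lodd : odd l.
  move: evn; rewrite ln oddD /= mul2n odd_double /=; by case: (odd l).
set Bad1 := [set v in R3 | #|NB [set v] :&: W1| <= 1].
set Bad2 := [set v in R3 | #|NB [set v] :&: W2| <= 1].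
have cbad (W B : {set V}) : W \subset D -> (forall s, 10 * M <= #|Dside W s|) ->
    B = [set v in R3 | #|NB [set v] :&: W| <= 1] -> #|B| < 2 * M.
  move=> sWD cW eB.
  have sBD : B \subset D.
    by rewrite eB; apply/subsetP => z; rewrite inE => /andP [/(subsetP sR3)].
  have cWW s : 2 * M <= #|Dside W s| by have := cW s; clia.
  have sm v : v \in B -> #|NB [set v] :&: W| <= 1 by rewrite eB inE => /andP [].
  have bs := bad_small H sWD sBD cWW sm.
  have: B \subset Dside B false :|: Dside B true.
    by apply/subsetP => z zB; rewrite !inE zB; case: (side z).
  move/card_sub2; have := bs false; have := bs true; clia.
have cb1 : #|Bad1| < 2 * M := cbad _ _ (subset_trans sW1 sR1D) cW1 erefl.
have cb2 : #|Bad2| < 2 * M := cbad _ _ (subset_trans sW2 sR2) cW2 erefl.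
set C := [set j : 'I_N | j < N - l].
have cC : #|C| = N - l by rewrite card_prefix //; clia.
set P1 := [set j : 'I_N | g j \in Bad1].
set P2 := [set j : 'I_N | (j < N - l) && (g (j + l) \in Bad2)].
have cP1 : #|P1| <= #|Bad1|.
  have inj : {in P1 &, injective (fun j : 'I_N => g j)}.
    by move=> j1 j2 _ _ /ginj e; apply: val_inj; apply: e.
  rewrite -(card_in_imset inj); apply: subset_leq_card.
  by apply/subsetP => z /imsetP [j]; rewrite inE => jB ->.
have cP2 : #|P2| <= #|Bad2|.
  have inj : {in P2 &, injective (fun j : 'I_N => g (j + l))}.
    move=> j1 j2; rewrite !inE => /andP [l1 _] /andP [l2 _] /ginj e.
    by apply: val_inj; apply/eqP; rewrite -(eqn_add2r l) e //; move: l1 l2; clia.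
  rewrite -(card_in_imset inj); apply: subset_leq_card.
  by apply/subsetP => z /imsetP [j]; rewrite inE => /andP [_ jB] ->.
have [j jG] : exists j, j \in C :\: (P1 :|: P2).
  apply/card_gt0P.
  have: C \subset (C :\: (P1 :|: P2)) :|: P1 :|: P2.
    by apply/subsetP => z zC; rewrite !in_setU in_setD zC andbT in_setU; case: (z \in P1); case: (z \in P2).
  move/card_sub3; rewrite cC; move: cP1 cP2 cb1 cb2 N57 ln nM; clia.
move: jG; rewrite in_setD in_setU negb_or => /andP [/andP [jP1 jP2] jC].
have jl : j < N - l by move: jC; rewrite inE.
have jB1 : g j \notin Bad1 by move: jP1; rewrite inE.
have jB2 : g (j + l) \notin Bad2 by move: jP2; rewrite inE jl.
set a := g j; set b := g (j + l).
have aR3 : a \in R3 by apply: gR3; move: (ltn_ord j); clia.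
have bR3 : b \in R3 by apply: gR3; move: jl; clia.
have aW1 : a \notin W1 by apply/negP => /W1R1; apply/negP; exact: disj13.
have bW2 : b \notin W2 by apply/negP => /W2R2; apply/negP; exact: disj23.
have dega : 2 <= #|NB [set a] :&: W1|.
  by move: jB1; rewrite inE aR3 /= -ltnNge.
have degb : 2 <= #|NB [set b] :&: W2|.
  by move: jB2; rewrite inE bR3 /= -ltnNge.
have [Sa [sSa cSa sdSa pSa]] := tree adj_side aW1 dega k0 kM eW1.
have [Sb [sSb cSb sdSb pSb]] := tree adj_side bW2 degb k0 kM eW2.
have sab : side b = ~~ side a.
  by rewrite /b /a /g (side_path a0 sT) ?lodd ?addbT //; move: jl; rewrite /N; clia.
set s := side a (+) odd k.
have [||x [y [xSa ySb xy]]] := H s Sa Sb _ _ (leq_trans Mk cSa) (leq_trans Mk cSb).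
- apply/subsetP => z zS; rewrite inE (subsetP (subset_trans sW1 sR1D)) ?(subsetP sSa) //=.
  by rewrite inE sdSa.
- apply/subsetP => z zS; rewrite inE (subsetP (subset_trans sW2 sR2)) ?(subsetP sSb) //=.
  by rewrite inE sdSb // sab /s addNb.
have [pa [pa0 pak pastep paW painj]] := pSa x xSa.
have [pb [pb0 pbk pbstep pbW pbinj]] := pSb y ySb.
have gb : g (j + l) = pb 0 by rewrite pb0.
have ga : g j = pa 0 by rewrite pa0.
pose F m := if m <= k then pa m else if m <= 2 * k then pb ((2 * k).+1 - m)
            else g (j + (n - m)).
have Fn : F n = F 0.
  rewrite /F leq0n.
  have -> : (n <= k) = false by apply/negbTE; rewrite -ltnNge; move: kn; clia.
  have -> : (n <= 2 * k) = false by apply/negbTE; rewrite -ltnNge.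
  by rewrite subnn addn0 ga.
have FA m : m < n -> adj (F m) (F m.+1).
  move=> mn; rewrite /F.
  case: (leqP m k) => h1.
  - case: (leqP m.+1 k) => h2; first exact: pastep.
    have e : m = k by move: h1 h2; clia.
    subst m.
    have -> : k.+1 <= 2 * k by move: k0; clia.
    rewrite (_ : (2 * k).+1 - k.+1 = k); last by clia.
    by rewrite pak pbk.
  have -> : (m.+1 <= k) = false by apply/negbTE; rewrite -ltnNge; move: h1; clia.
  case: (leqP m (2 * k)) => h3.
  - case: (leqP m.+1 (2 * k)) => h4.
    + have e : (2 * k).+1 - m = ((2 * k).+1 - m.+1).+1 by move: h4; clia.
      rewrite e adj_sym; apply: pbstep; move: h1 h4; clia.
    + have e1 : (2 * k).+1 - m = 1 by move: h3 h4; clia.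
      have e2 : j + (n - m.+1) = j + l by move: h3 h4 ln; clia.
      rewrite e1 e2 gb adj_sym; apply: pbstep; move: k0; clia.
  - have -> : (m.+1 <= 2 * k) = false by apply/negbTE; rewrite -ltnNge; move: h3; clia.
    have e : j + (n - m) = (j + (n - m.+1)).+1 by move: mn; clia.
    rewrite e adj_sym; apply: gadj; rewrite -e; move: jl h3 ln mn; rewrite /N; clia.
pose idx m := if m == 0 then (j : nat) else j + (n - m).
have cls m : m < n ->
   [\/ ((m == 0) || (2 * k < m)) /\ F m = g (idx m),
       (0 < m <= k) /\ (F m \in W1 /\ F m = pa m) |
       (k < m <= 2 * k) /\ (F m \in W2 /\ F m = pb ((2 * k).+1 - m))].
  move=> mn; rewrite /F /idx.
  case: (eqVneq m 0) => [->|m0]; first by apply: Or31; split => //; rewrite leq0n ga.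
  case: (leqP m k) => h1.
    apply: Or32; split; first by move: m0 h1; clia.
    by split => //; apply: paW; move: m0 h1; clia.
  case: (leqP m (2 * k)) => h2.
    apply: Or33; split; first by move: h1 h2; clia.
    by split => //; apply: pbW; move: h1 h2; clia.
  by apply: Or31; split => //; rewrite h2 orbT.
have idxN m : m < n -> (m == 0) || (2 * k < m) -> idx m < N.
  rewrite /idx => mn; case: eqP => _ /=; move: jl ln; rewrite /N; clia.
have Fin m1 m2 : m1 < n -> m2 < n -> F m1 = F m2 -> m1 = m2.
  move=> l1 l2.
  have W1n z : z \in W1 -> z \in R3 -> False.
    by move=> /W1R1 z1 /disj13; rewrite z1.
  have W2n z : z \in W2 -> z \in R3 -> False.
    by move=> /W2R2 z1 /disj23; rewrite z1.
  have W12 z : z \in W1 -> z \in W2 -> False.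
    by move=> /W1R1 z1 /W2R2 /disj12; rewrite z1.
  case: (cls m1 l1) => [[q1 e1]|[q1 [w1 e1]]|[q1 [w1 e1]]];
  case: (cls m2 l2) => [[q2 e2]|[q2 [w2 e2]]|[q2 [w2 e2]]] E.
  - have := ginj _ _ (idxN _ l1 q1) (idxN _ l2 q2); rewrite -e1 -e2 => /(_ E).
    rewrite /idx; case: eqP => h1; case: eqP => h2; move: l1 l2 q1 q2 h1 h2; clia.
  - by exfalso; apply: (W1n (F m2)) => //; rewrite -E e1 gR3 // idxN.
  - by exfalso; apply: (W2n (F m2)) => //; rewrite -E e1 gR3 // idxN.
  - by exfalso; apply: (W1n (F m1)) => //; rewrite E e2 gR3 // idxN.
  - apply: painj; rewrite -?e1 -?e2 //; move: q1 q2; clia.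
  - by exfalso; apply: (W12 (F m1)) => //; rewrite E.
  - by exfalso; apply: (W2n (F m1)) => //; rewrite E e2 gR3 // idxN.
  - by exfalso; apply: (W12 (F m1)) => //; rewrite E.
  - have := pbinj ((2 * k).+1 - m1) ((2 * k).+1 - m2).
    rewrite -e1 -e2 => /(_ _ _ E); move: q1 q2; clia.
exists (fun i : 'I_n => F i); split.
  by move=> i1 i2 /Fin e; apply: val_inj; apply: e.
move=> i i' e; change (adj (F i) (F i')).
case: (ltnP i.+1 n) => h.
  by move: e; rewrite modn_small // => ->; apply: FA.
have ei : i.+1 = n by move: (ltn_ord i) h; clia.
move: e; rewrite ei modnn => ->; have := FA i (ltn_ord i); by rewrite ei Fn.
Qed.
End Core3.


Section Ram.
Variables (b K : nat) (c : bcoloring b K).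

Local Notation Vb := ('I_b + 'I_b)%type.
Definition sideb (v : Vb) := if v is inr _ then true else false.
Definition adjc (col : 'I_K) : rel Vb := fun u v => ecol c u v == Some col.

Lemma ecol_sym u v : ecol c u v = ecol c v u.
Proof. by case: u; case: v. Qed.

Lemma adjc_sym col u v : adjc col u v = adjc col v u.
Proof. by rewrite /adjc ecol_sym. Qed.

Lemma adjc_side col u v : adjc col u v -> sideb v = ~~ sideb u.
Proof. by case: u => x; case: v => y. Qed.

Lemma step (col : 'I_K) (A B : {set 'I_b}) (M nn : nat) :
  81 * M <= #|A| -> 81 * M <= #|B| ->
  (forall x y, x \in A -> y \in B -> col <= c x y) ->
  1 < M -> ~~ odd nn -> 2 * up_log 2 M < nn -> nn <= M ->
  (exists f : 'I_nn -> Vb, injective f /\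
     forall i j : 'I_nn, val j = (val i).+1 %% nn -> ecol c (f i) (f j) = Some col)
  \/ exists A' B' : {set 'I_b},
       [/\ M <= #|A'|, M <= #|B'| & forall x y, x \in A' -> y \in B' -> col < c x y].
Proof.
move=> cA cB cc M1 evn kn nM.
set D := (inl @: A) :|: (inr @: B) : {set Vb}.
have inD1 x : (inl x \in D) = (x \in A).
  rewrite in_setU; apply/orP/idP => [[]|xA]; last by left; apply/imsetP; exists x.
  - by case/imsetP => z zA [->].
  - by case/imsetP.
have inD2 y : (inr y \in D) = (y \in B).
  rewrite in_setU; apply/orP/idP => [[]|yB]; last by right; apply/imsetP; exists y.
  - by case/imsetP.
  - by case/imsetP => z zB [->].
case: (classic (exists X Y : {set Vb}, [/\ X \subset Dside sideb D false,
     Y \subset Dside sideb D true, M <= #|X|, M <= #|Y| &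
     forall x y, x \in X -> y \in Y -> ~~ adjc col x y])).
  move=> [X [Y [sX sY cX cY noE]]]; right.
  exists [set x | inl x \in X], [set y | inr y \in Y]; split.
  - apply: leq_trans cX _.
    rewrite -(card_imset _ (@inl_inj 'I_b 'I_b)); apply: subset_leq_card.
    apply/subsetP => z zX; move: (subsetP sX z zX); rewrite !inE.
    case: z zX => [x|y] zX /=; rewrite ?andbF // => _.
    by apply/imsetP; exists x => //; rewrite inE.
  - apply: leq_trans cY _.
    rewrite -(card_imset _ (@inr_inj 'I_b 'I_b)); apply: subset_leq_card.
    apply/subsetP => z zY; move: (subsetP sY z zY); rewrite !inE.
    case: z zY => [x|y] zY /=; rewrite ?andbF // => _.
    by apply/imsetP; exists y => //; rewrite inE.
  move=> x y; rewrite !inE => xX yY.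
  have xA : x \in A by rewrite -inD1; move: (subsetP sX _ xX); rewrite inE => /andP [].
  have yB : y \in B by rewrite -inD2; move: (subsetP sY _ yY); rewrite inE => /andP [].
  have := noE _ _ xX yY; rewrite /adjc /= => ne.
  rewrite ltn_neqAle cc // andbT; apply/eqP => e; move: ne.
  by rewrite (_ : c x y = col) ?eqxx //; apply: val_inj.
move=> nE; left.
have H : noHole (adjc col) sideb M D.
  move=> s X Y sX sY cX cY.
  case: (classic (exists x y, [/\ x \in X, y \in Y & adjc col x y])) => // nEd.
  exfalso; apply: nE; case: s sX sY => sX sY.
  - exists Y, X; split => // x y xY yX; apply/negP => a; apply: nEd.
    by exists y, x; rewrite adjc_sym.
  - exists X, Y; split => // x y xX yY; apply/negP => a; apply: nEd.
    by exists x, y.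
have big s : 81 * M <= #|Dside sideb D s|.
  case: s.
  - apply: leq_trans cB _; rewrite -(card_imset _ (@inr_inj 'I_b 'I_b)).
    apply: subset_leq_card; apply/subsetP => z /imsetP [y yB ->].
    by rewrite /Dside in_setI inD2 yB inE.
  - apply: leq_trans cA _; rewrite -(card_imset _ (@inl_inj 'I_b 'I_b)).
    apply: subset_leq_card; apply/subsetP => z /imsetP [x xA ->].
    by rewrite /Dside in_setI inD1 xA inE.
have k0 : 0 < up_log 2 M by rewrite up_log_gt0.
have kM : 2 ^ (up_log 2 M).-1 < M by apply: up_log_gtn.
have Mk : M <= 2 ^ up_log 2 M by apply: up_logP.
have [f [finj fadj]] := core (@adjc_sym col) (@adjc_side col) H big k0 kM Mk evn kn nM.
by exists f; split => // i j e; apply/eqP; apply: fadj.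
Qed.

End Ram.


Theorem corollary2p5 (m t : nat) (n : 'I_t -> nat) :
  0 < m -> 0 < t ->
  (forall i, 0 < n i /\ ~~ odd (n i) /\ n i <= m /\
             (2 * up_log 2 (81 ^ (t - 1) * m)).+1 <= n i) ->
  BR_le (rcons [seq cycle_graph (n i) | i <- enum 'I_t] (Kmm m)) (81 ^ t * m).
Proof.
move=> m0 t0 hn.
set Gs := rcons _ _.
have sG : size Gs = t.+1 by rewrite /Gs size_rcons size_map size_enum_ord.
have nthC (i : 'I_t) : nth (cycle_graph 0) Gs i = cycle_graph (n i).
  rewrite /Gs nth_rcons size_map size_enum_ord ltn_ord (nth_map i) ?size_enum_ord //.
  by congr (cycle_graph (n _)); apply: val_inj; rewrite /= nth_enum_ord.
have nthK : nth (cycle_graph 0) Gs t = Kmm m.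
  by rewrite /Gs nth_rcons size_map size_enum_ord ltnn eqxx.
exists (81 ^ t * m) => // c.
set b := 81 ^ t * m.
have claim jj : jj <= t -> (exists i, mono_copy c i (nth (cycle_graph 0) Gs i)) \/
   exists A B : {set 'I_b}, [/\ 81 ^ (t - jj) * m <= #|A|, 81 ^ (t - jj) * m <= #|B| &
     forall x y, x \in A -> y \in B -> jj <= c x y].
  elim: jj => [_|jj IH ljt].
    by right; exists setT, setT; rewrite cardsT card_ord subn0.
  case: (IH (ltnW ljt)) => [|[A [B [cA cB cc]]]]; first by left.
  set M := 81 ^ (t - jj.+1) * m.
  have colj : jj < size Gs by rewrite sG; have := ljt; clia.
  set cl := Ordinal colj.
  set i0 : 'I_t := Ordinal ljt.
  have [ni0 [evn [nm nk]]] := hn i0.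
  have e81 : 81 ^ (t - jj) * m = 81 * M.
    by rewrite /M mulnA -expnS; congr (81 ^ _ * m); have := ljt; clia.
  have Mm : m <= M by rewrite /M leq_pmull // expn_gt0.
  have M1 : 1 < M.
    apply: leq_trans Mm; apply: leq_trans nm.
    move: ni0 evn; case: (n i0) => [|[|]] //.
  have kk : up_log 2 M <= up_log 2 (81 ^ (t - 1) * m).
    apply: leq_up_log; rewrite /M leq_mul2r leq_exp2l ?orbT //; have := ljt; clia.
  have := @step _ _ c cl A B M (n i0).
  rewrite -e81 => /(_ cA cB cc M1 evn).
  case=> [||[f [finj fadj]]|[A' [B' [cA' cB' cc']]]].
  - by move: kk nk; clia.
  - by move: nm Mm; clia.
  - left; exists cl; rewrite (nthC i0); exists f; split => //.
    move=> u v /andP [_ /orP [/eqP e|/eqP e]]; first exact: fadj.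
    by rewrite ecol_sym; apply: fadj.
  - by right; exists A', B'; split => // x y xA yB; apply: cc'.
case: (claim t (leqnn t)) => [//|[A [B [cA cB cc]]]].
rewrite subnn expn0 mul1n in cA cB.
have colt : t < size Gs by rewrite sG.
exists (Ordinal colt); rewrite nthK.
have /card_gt0P [x0 _] : 0 < #|A| by apply: leq_trans cA.
pose f (u : 'I_m + 'I_m) : ('I_b + 'I_b)%type :=
  match u with inl i => inl (nth x0 (enum A) i) | inr i => inr (nth x0 (enum B) i) end.
have szA : m <= size (enum A) by rewrite -cardE.
have szB : m <= size (enum B) by rewrite -cardE.
exists f; split.
  move=> [i|i] [j|j] //= [] /eqP; rewrite nth_uniq ?enum_uniq //;
    try (by move=> /eqP e; congr (_ _); apply: val_inj);
    by apply: leq_trans (ltn_ord _) _.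
have inA (i : 'I_m) : nth x0 (enum A) i \in A.
  by rewrite -mem_enum mem_nth // (leq_trans (ltn_ord i)).
have inB (i : 'I_m) : nth x0 (enum B) i \in B.
  by rewrite -mem_enum mem_nth // (leq_trans (ltn_ord i)).
move=> [i|i] [j|j] //= _; congr Some; apply: val_inj => /=.
- move: (cc _ _ (inA i) (inB j)) (ltn_ord (c (nth x0 (enum A) i) (nth x0 (enum B) j))) sG.
  by move=> h1 h2 e; apply/eqP; rewrite eqn_leq h1 andbT -ltnS -e.
- move: (cc _ _ (inA j) (inB i)) (ltn_ord (c (nth x0 (enum A) j) (nth x0 (enum B) i))) sG.
  by move=> h1 h2 e; apply/eqP; rewrite eqn_leq h1 andbT -ltnS -e.
Qed.
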